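(* Let $(E,P,\vartheta)$ be a complete bipolar metric space and let $F\colon E\cup P\to E\cup P$ with $F(E)\subseteq E$, $F(P)\subseteq P$ be a polynomial contraction, i.e. there exist $\pi\in(0,1)$, an integer $\sigma\geq1$ and functions $q_\upsilon\colon E\times P\to[0,\infty)$, $\upsilon=0,\dots,\sigma$, such that $$\sum_{\upsilon=0}^{\sigma} q_\upsilon(Fe,Ff)\,\vartheta^\upsilon(Fe,Ff)\leq \pi\sum_{\upsilon=0}^{\sigma} q_\upsilon(e,f)\,\vartheta^\upsilon(e,f)\quad\text{for all } e\in E,\ f\in P.$$ Assume (i) $F$ is Picard-continuous, and (ii) there exist $\varrho\in\{1,\dots,\sigma\}$ and $Q_\varrho>0$ with $q_\varrho(e,f)\geq Q_\varrho$ for all $e\in E$, $f\in P$. Then $F$ has a unique fixed point.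
   Context: A bipolar metric space is a triple $(E,P,\vartheta)$ where $E,P$ are nonempty sets and $\vartheta\colon E\times P\to[0,\infty)$ satisfies: (1) for $e\in E$, $f\in P$, $\vartheta(e,f)=0$ iff $e=f$; (2) $\vartheta(e,f)=\vartheta(f,e)$ whenever $e,f\in E\cap P$; (3) $\vartheta(e,f)\leq\vartheta(e,z)+\vartheta(r,z)+\vartheta(r,f)$ for all $e,r\in E$, $z,f\in P$. A sequence $(x_n)$ in $E$ converges to $y\in P$ if $\vartheta(x_n,y)\to0$; a sequence $(y_n)$ in $P$ converges to $x\in E$ if $\vartheta(x,y_n)\to0$. A bisequence $(x_n,y_n)$ with $x_n\in E$, $y_n\in P$ is Cauchy if for every $\varepsilon>0$ there is $N$ with $\vartheta(x_n,y_m)<\varepsilon$ for all $n,m\geq N$; the space is complete if every Cauchy bisequence is convergent. $F$ is Picard-continuous if for all $g\in E$, $h\in P$: $\lim_{n\to\infty}\vartheta(F^n g,h)=0$ implies $\lim_{n\to\infty}\vartheta(F(F^ng),Fh)=0$, where $F^0g=g$, $F^{n+1}g=F(F^ng)$. $\vartheta^\upsilon$ denotes the $\upsilon$-th power of $\vartheta$, with $\vartheta^0\equiv1$. A fixed point of $F$ is a point $g$ with $Fg=g$. *)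

(* Defs.v *)
From Stdlib Require Import Reals.
Open Scope R_scope.

(* A bipolar metric space (E,P,d): E and P are nonempty subsets (predicates) of
   an ambient type X (so that E ∩ P and E ∪ P make sense); d is only
   meaningful on E × P. *)
Definition bipolar_metric {X : Type} (E P : X -> Prop) (d : X -> X -> R) : Prop :=
  (exists e, E e) /\ (exists p, P p) /\
  (forall e f, E e -> P f -> 0 <= d e f) /\
  (forall e f, E e -> P f -> (d e f = 0 <-> e = f)) /\
  (forall e f, E e -> P e -> E f -> P f -> d e f = d f e) /\
  (forall e r z f, E e -> E r -> P z -> P f ->
     d e f <= d e z + d r z + d r f).

Definition conv_EP {X : Type} (d : X -> X -> R) (x : nat -> X) (y : X) : Prop :=
  Un_cv (fun n => d (x n) y) 0.

Definition conv_PE {X : Type} (d : X -> X -> R) (y : nat -> X) (x : X) : Prop :=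
  Un_cv (fun n => d x (y n)) 0.

Definition cauchy_bisequence {X : Type} (d : X -> X -> R) (x y : nat -> X) : Prop :=
  forall eps, eps > 0 -> exists N, forall n m, (n >= N)%nat -> (m >= N)%nat ->
    d (x n) (y m) < eps.

Definition convergent_bisequence {X : Type} (E P : X -> Prop) (d : X -> X -> R)
  (x y : nat -> X) : Prop :=
  (exists q, P q /\ conv_EP d x q) /\ (exists p, E p /\ conv_PE d y p).

Definition bipolar_complete {X : Type} (E P : X -> Prop) (d : X -> X -> R) : Prop :=
  forall x y : nat -> X, (forall n, E (x n)) -> (forall n, P (y n)) ->
    cauchy_bisequence d x y -> convergent_bisequence E P d x y.

Fixpoint iter_map {X : Type} (F : X -> X) (n : nat) (g : X) : X :=
  match n with
  | O => g
  | S k => F (iter_map F k g)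
  end.

Definition picard_continuous {X : Type} (E P : X -> Prop) (d : X -> X -> R)
  (F : X -> X) : Prop :=
  forall g h, E g -> P h ->
    Un_cv (fun n => d (iter_map F n g) h) 0 ->
    Un_cv (fun n => d (F (iter_map F n g)) (F h)) 0.

Definition poly_sum {X : Type} (d : X -> X -> R) (q : nat -> X -> X -> R)
  (sigma : nat) (e f : X) : R :=
  sum_f_R0 (fun u => q u e f * (d e f) ^ u) sigma.

Definition polynomial_contraction {X : Type} (E P : X -> Prop) (d : X -> X -> R)
  (F : X -> X) (pi : R) (sigma : nat) (q : nat -> X -> X -> R) : Prop :=
  0 < pi < 1 /\ (1 <= sigma)%nat /\
  (forall u e f, (u <= sigma)%nat -> E e -> P f -> 0 <= q u e f) /\
  (forall e f, E e -> P f ->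
     poly_sum d q sigma (F e) (F f) <= pi * poly_sum d q sigma e f).

(* Main.v *)
Require Import Defs.
From Stdlib Require Import Reals.
From Stdlib Require Import Lra Lia.
Open Scope R_scope.

Lemma sum_nonneg (f : nat -> R) (n : nat) :
  (forall i, (i <= n)%nat -> 0 <= f i) -> 0 <= sum_f_R0 f n.
Proof.
  induction n as [|n IH]; intros H; simpl.
  - apply H; lia.
  - assert (0 <= f (S n)) by (apply H; lia).
    assert (0 <= sum_f_R0 f n) by (apply IH; intros; apply H; lia). lra.
Qed.

Lemma sum_ge_term (f : nat -> R) (n k : nat) :
  (forall i, (i <= n)%nat -> 0 <= f i) -> (k <= n)%nat -> f k <= sum_f_R0 f n.
Proof.
  induction n as [|n IH]; intros H Hk; simpl.
  - replace k with 0%nat by lia. lra.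
  - destruct (Nat.eq_dec k (S n)) as [->|Hne].
    + assert (0 <= sum_f_R0 f n) by (apply sum_nonneg; intros; apply H; lia). lra.
    + assert (f k <= sum_f_R0 f n) by (apply IH; [intros; apply H; lia| lia]).
      assert (0 <= f (S n)) by (apply H; lia). lra.
Qed.

Lemma iter_S {X : Type} (F : X -> X) n g : iter_map F (S n) g = iter_map F n (F g).
Proof. induction n as [|n IH]; simpl; auto. simpl in IH. rewrite IH. reflexivity. Qed.

Lemma iter_in {X : Type} (A : X -> Prop) (F : X -> X) n g :
  (forall e, A e -> A (F e)) -> A g -> A (iter_map F n g).
Proof. intros HF Hg; induction n; simpl; auto. Qed.

Lemma pow_lt_mono (x y : R) (n : nat) : 0 <= y -> y < x -> (1 <= n)%nat -> y ^ n < x ^ n.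
Proof.
  intros Hy Hyx Hn. induction n as [|n IH]; [lia|].
  destruct n as [|n]; simpl; [lra|].
  assert (y ^ S n < x ^ S n) by (apply IH; lia).
  assert (0 <= y ^ S n) by (apply pow_le; lra).
  simpl in *. nra.
Qed.

Lemma Rpower_root (z : R) (rho : nat) : 0 < z -> (1 <= rho)%nat ->
  Rpower z (/ INR rho) ^ rho = z.
Proof.
  intros Hz Hr.
  rewrite <- Rpower_pow by (unfold Rpower; apply exp_pos).
  rewrite Rpower_mult. rewrite Rinv_l.
  - apply Rpower_1; auto.
  - apply not_0_INR; lia.
Qed.

Lemma root_bound (x A pi : R) (rho n : nat) :
  0 <= x -> 0 < A -> 0 < pi -> (1 <= rho)%nat ->
  x ^ rho <= pi ^ n * A ->
  x <= Rpower A (/ INR rho) * (Rpower pi (/ INR rho)) ^ n.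
Proof.
  intros Hx HA Hpi Hr H.
  set (c := Rpower A (/ INR rho)). set (t := Rpower pi (/ INR rho)).
  assert (Hc : 0 < c) by (unfold c, Rpower; apply exp_pos).
  assert (Ht : 0 < t) by (unfold t, Rpower; apply exp_pos).
  assert (Hy : 0 < c * t ^ n) by (apply Rmult_lt_0_compat; auto; apply pow_lt; auto).
  assert (Heq : (c * t ^ n) ^ rho = pi ^ n * A).
  { rewrite Rpow_mult_distr. rewrite <- pow_mult. rewrite Nat.mul_comm, pow_mult.
    unfold c, t. rewrite !Rpower_root by auto. ring. }
  destruct (Rle_or_lt x (c * t ^ n)) as [Hle|Hlt]; auto.
  exfalso. pose proof (pow_lt_mono x (c * t ^ n) rho ltac:(lra) Hlt Hr). lra.
Qed.

Lemma dec_lemma (c t : R) (n : nat) : 0 < c -> 0 < t < 1 -> c * t ^ S n <= c * t ^ n.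
Proof.
  intros Hc Ht. simpl. assert (0 <= t ^ n) by (apply pow_le; lra).
  assert (0 <= c * t ^ n) by (apply Rmult_le_pos; lra). nra.
Qed.

Lemma eq0_of_small (a : R) : 0 <= a -> (forall eps, eps > 0 -> a < eps) -> a = 0.
Proof.
  intros H0 H. destruct (Req_dec a 0); auto.
  exfalso. specialize (H (a/2) ltac:(lra)). lra.
Qed.

Theorem theorem3p11 (X : Type) (E P : X -> Prop) (d : X -> X -> R) (F : X -> X)
  (pi : R) (sigma : nat) (q : nat -> X -> X -> R) :
  bipolar_metric E P d ->
  bipolar_complete E P d ->
  (forall e, E e -> E (F e)) ->
  (forall f, P f -> P (F f)) ->
  polynomial_contraction E P d F pi sigma q ->
  picard_continuous E P d F ->
  (exists (rho : nat) (Q : R), (1 <= rho <= sigma)%nat /\ 0 < Q /\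
     forall e f, E e -> P f -> q rho e f >= Q) ->
  exists g, (E g \/ P g) /\ F g = g /\
    forall g', (E g' \/ P g') -> F g' = g' -> g' = g.
Proof.
  intros [[e0 He0] [[f0 Hf0] [Hnn [Hz [Hsym Htri]]]]] HC HFE HFP
    [[Hpi0 Hpi1] [Hs [Hq Hcontr]]] Hpic [rho [Q [[Hr1 Hr2] [HQ HqQ]]]].
  assert (Hps0 : forall e f, E e -> P f -> 0 <= poly_sum d q sigma e f).
  { intros e f He Hf. unfold poly_sum. apply sum_nonneg. intros i Hi.
    apply Rmult_le_pos; [apply Hq; auto| apply pow_le; apply Hnn; auto]. }
  assert (Hpsge : forall e f, E e -> P f -> Q * d e f ^ rho <= poly_sum d q sigma e f).
  { intros e f He Hf.
    assert (q rho e f * d e f ^ rho <= poly_sum d q sigma e f).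
    { unfold poly_sum. apply (sum_ge_term (fun u => q u e f * d e f ^ u)); auto.
      intros i Hi. apply Rmult_le_pos; [apply Hq; auto| apply pow_le; apply Hnn; auto]. }
    assert (0 <= d e f ^ rho) by (apply pow_le; apply Hnn; auto).
    specialize (HqQ e f He Hf). nra. }
  assert (Hit : forall n e f, E e -> P f ->
    poly_sum d q sigma (iter_map F n e) (iter_map F n f) <= pi ^ n * poly_sum d q sigma e f).
  { induction n as [|n IH]; intros e f He Hf; simpl.
    - lra.
    - pose proof (Hcontr _ _ (iter_in E F n e HFE He) (iter_in P F n f HFP Hf)).
      specialize (IH e f He Hf).
      assert (pi * poly_sum d q sigma (iter_map F n e) (iter_map F n f) <=
              pi * (pi ^ n * poly_sum d q sigma e f)) by (apply Rmult_le_compat_l; lra).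
      lra. }
  assert (Huniq : forall e f, E e -> P f -> F e = e -> F f = f -> e = f).
  { intros e f He Hf Hfe Hff.
    pose proof (Hcontr e f He Hf) as H. rewrite Hfe, Hff in H.
    pose proof (Hps0 e f He Hf). pose proof (Hpsge e f He Hf).
    assert (Hd0 := Hnn e f He Hf).
    apply (proj1 (Hz e f He Hf)).
    destruct (Req_dec (d e f) 0); auto. exfalso.
    assert (0 < d e f ^ rho) by (apply pow_lt; lra).
    assert (0 < Q * d e f ^ rho) by (apply Rmult_lt_0_compat; lra).
    assert (pi * poly_sum d q sigma e f < poly_sum d q sigma e f) by nra.
    lra. }
  set (x := fun n => iter_map F n e0). set (y := fun n => iter_map F n f0).
  assert (Hx : forall n, E (x n)) by (intros; apply iter_in; auto).
  assert (Hy : forall n, P (y n)) by (intros; apply iter_in; auto).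
  set (K := poly_sum d q sigma e0 f0 + poly_sum d q sigma (F e0) f0
            + poly_sum d q sigma e0 (F f0) + 1).
  assert (HK0 : 0 <= poly_sum d q sigma e0 f0) by auto.
  assert (HK1 : 0 <= poly_sum d q sigma (F e0) f0) by auto.
  assert (HK2 : 0 <= poly_sum d q sigma e0 (F f0)) by auto.
  set (c := Rpower (K / Q) (/ INR rho)). set (t := Rpower pi (/ INR rho)).
  assert (Hc : 0 < c) by (unfold c, Rpower; apply exp_pos).
  assert (Ht0 : 0 < t) by (unfold t, Rpower; apply exp_pos).
  assert (Ht1 : t < 1).
  { unfold t, Rpower. rewrite <- exp_0. apply exp_increasing.
    assert (ln pi < 0) by (rewrite <- ln_1; apply ln_increasing; lra).
    assert (0 < / INR rho) by (apply Rinv_0_lt_compat, lt_0_INR; lia). nra. }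
  assert (Hbound : forall n e f, E e -> P f -> poly_sum d q sigma e f <= K ->
     d (iter_map F n e) (iter_map F n f) <= c * t ^ n).
  { intros n e f He Hf HeK. apply root_bound; auto; try lia.
    - apply Hnn; apply iter_in; auto.
    - apply Rdiv_lt_0_compat; unfold K; lra.
    - pose proof (Hit n e f He Hf).
      pose proof (Hpsge _ _ (iter_in E F n e HFE He) (iter_in P F n f HFP Hf)).
      assert (pi ^ n * poly_sum d q sigma e f <= pi ^ n * K).
      { apply Rmult_le_compat_l; auto. apply pow_le; lra. }
      apply (Rmult_le_reg_l Q); auto.
      replace (Q * (pi ^ n * (K / Q))) with (pi ^ n * K) by (field; lra). lra. }
  assert (B0 : forall n, d (x n) (y n) <= c * t ^ n).
  { intros n. apply Hbound; auto. unfold K; lra. }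
  assert (B1 : forall n, d (x (S n)) (y n) <= c * t ^ n).
  { intros n. unfold x. rewrite iter_S. apply Hbound; auto. unfold K; lra. }
  assert (B2 : forall n, d (x n) (y (S n)) <= c * t ^ n).
  { intros n. unfold y. rewrite iter_S. apply Hbound; auto. unfold K; lra. }
  set (C := 3 * c / (1 - t)).
  assert (HC1 : C * (1 - t) = 3 * c) by (unfold C; field; lra).
  assert (HCc : c <= C).
  { assert (0 < C) by (unfold C; apply Rdiv_lt_0_compat; lra).
    assert (0 < C * t) by (apply Rmult_lt_0_compat; lra). lra. }
  assert (Hstep : forall n, 2 * (c * t ^ n) + C * t ^ S n <= C * t ^ n).
  { intros n. simpl. assert (0 <= t ^ n) by (apply pow_le; lra). nra. }
  assert (Hbase : forall n, c * t ^ n <= C * t ^ n).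
  { intros n. assert (0 <= t ^ n) by (apply pow_le; lra). nra. }
  assert (CA : forall j n, d (x n) (y (n + j)%nat) <= C * t ^ n).
  { induction j as [|j IH]; intros n.
    - rewrite Nat.add_0_r. pose proof (B0 n). pose proof (Hbase n). lra.
    - pose proof (Htri (x n) (x (S n)) (y (S n)) (y (n + S j)%nat)
        (Hx _) (Hx _) (Hy _) (Hy _)).
      replace (n + S j)%nat with (S n + j)%nat in * by lia.
      pose proof (IH (S n)). pose proof (B2 n). pose proof (B0 (S n)).
      pose proof (Hstep n).
      assert (c * t ^ S n <= c * t ^ n).
      { apply dec_lemma; lra. }
      lra. }
  assert (CB : forall j m, d (x (m + j)%nat) (y m) <= C * t ^ m).
  { induction j as [|j IH]; intros m.
    - rewrite Nat.add_0_r. pose proof (B0 m). pose proof (Hbase m). lra.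
    - pose proof (Htri (x (m + S j)%nat) (x (S m)) (y (S m)) (y m)
        (Hx _) (Hx _) (Hy _) (Hy _)).
      replace (m + S j)%nat with (S m + j)%nat in * by lia.
      pose proof (IH (S m)). pose proof (B1 m). pose proof (B0 (S m)).
      pose proof (Hstep m).
      assert (c * t ^ S m <= c * t ^ m).
      { apply dec_lemma; lra. }
      lra. }
  assert (Hcauchy : cauchy_bisequence d x y).
  { intros eps Heps.
    assert (HC0 : 0 <= C) by lra.
    destruct (pow_lt_1_zero t ltac:(rewrite Rabs_right; lra) (eps / (C + 1))
      ltac:(apply Rdiv_lt_0_compat; lra)) as [N HN].
    exists N. intros n m Hn Hm.
    assert (Hsm : forall k, (k >= N)%nat -> C * t ^ k < eps).
    { intros k Hk. specialize (HN k Hk). rewrite Rabs_right in HN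
        by (apply Rle_ge, pow_le; lra).
      assert (0 <= t ^ k) by (apply pow_le; lra).
      assert (C * t ^ k <= (C + 1) * t ^ k) by lra.
      assert ((C + 1) * t ^ k < (C + 1) * (eps / (C + 1)))
        by (apply Rmult_lt_compat_l; lra).
      replace ((C + 1) * (eps / (C + 1))) with eps in * by (field; lra). lra. }
    destruct (Nat.le_ge_cases n m) as [Hnm|Hmn].
    - replace m with (n + (m - n))%nat by lia.
      pose proof (CA (m - n)%nat n). pose proof (Hsm n Hn). lra.
    - replace n with (m + (n - m))%nat by lia.
      pose proof (CB (n - m)%nat m). pose proof (Hsm m Hm). lra. }
  destruct (HC x y Hx Hy Hcauchy) as [[q' [Hq' Hcq]] [p' [Hp' Hcp]]].
  assert (Hpq : p' = q').
  { apply (proj1 (Hz p' q' Hp' Hq')). apply eq0_of_small; [apply Hnn; auto|].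
    intros eps Heps.
    destruct (Hcq (eps/3) ltac:(lra)) as [N1 H1].
    destruct (Hcp (eps/3) ltac:(lra)) as [N2 H2].
    destruct (Hcauchy (eps/3) ltac:(lra)) as [N3 H3].
    set (n := (N1 + N2 + N3)%nat).
    specialize (H1 n ltac:(unfold n; lia)). specialize (H2 n ltac:(unfold n; lia)).
    specialize (H3 n n ltac:(unfold n; lia) ltac:(unfold n; lia)).
    unfold R_dist in H1, H2. rewrite Rminus_0_r in H1, H2.
    rewrite Rabs_right in H1 by (apply Rle_ge, Hnn; auto).
    rewrite Rabs_right in H2 by (apply Rle_ge, Hnn; auto).
    pose proof (Htri p' (x n) (y n) q' Hp' (Hx n) (Hy n) Hq'). lra. }
  subst q'.
  assert (HFu : F p' = p').
  { pose proof (Hpic e0 p' He0 Hq' Hcq) as Hpc.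
    symmetry. apply (proj1 (Hz p' (F p') Hp' (HFP _ Hq'))).
    apply eq0_of_small; [apply Hnn; auto|].
    intros eps Heps.
    destruct (Hcq (eps/2) ltac:(lra)) as [N1 H1].
    destruct (Hpc (eps/2) ltac:(lra)) as [N2 H2].
    specialize (H1 (S (N1 + N2)) ltac:(lia)). specialize (H2 (N1 + N2)%nat ltac:(lia)).
    unfold R_dist in H1, H2. rewrite Rminus_0_r in H1, H2.
    unfold x in H1. simpl in H1.
    rewrite Rabs_right in H1 by (apply Rle_ge, Hnn; auto; apply HFE, iter_in; auto).
    rewrite Rabs_right in H2 by (apply Rle_ge, Hnn; auto; apply HFE, iter_in; auto).
    pose proof (Htri p' (F (iter_map F (N1 + N2) e0)) p' (F p') Hp'
      (HFE _ (iter_in E F _ _ HFE He0)) Hq' (HFP _ Hq')).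
    assert (d p' p' = 0) by (apply (proj2 (Hz p' p' Hp' Hq')); reflexivity).
    lra. }
  exists p'. split; [left; auto|]. split; auto.
  intros g' [Hg|Hg] Hfg.
  - apply Huniq; auto.
  - symmetry. apply Huniq; auto.
Qed.
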